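(* Let $m,a,b$ be positive integers with $(3m+1)/2\le a<b\le (5m-1)/3$. Let $A=\{a,b\}$ and assume that the nine integers $$a,\ b,\ 2a,\ a+b,\ 2b,\ 3a,\ 2a+b,\ a+2b,\ 3b$$ are pairwise distinct modulo $m$. Let $S=\langle m,a,b\rangle_{4m}$. Then $S$ has conductor $c=4m$ and $W_0(S)=-1$.
   Context: $\mathbb N=\{0,1,2,\dots\}$; $[x,y]=\{z\in\mathbb Z: x\le z\le y\}$. For positive integers $a_1,\dots,a_n,t$, $\langle a_1,\dots,a_n\rangle_t=(\mathbb N a_1+\dots+\mathbb N a_n)\cup\{z\in\mathbb Z: z\ge t\}$; this is a numerical semigroup. A numerical semigroup is a submonoid $S\subseteq\mathbb N$ with $\mathbb N\setminus S$ finite; multiplicity $m=\min(S\setminus\{0\})$; conductor $c=1+\max(\mathbb Z\setminus S)$; $q=\lceil c/m\rceil$, $\rho=qm-c$. Let $S^*=S\setminus\{0\}$, $D=S^*+S^*$, $P=S^*\setminus D$ (primitive elements), $L=S\cap[0,c-1]$, $D_q=D\cap[c,c+m-1]$, and $W_0(S)=|P\cap L|\,|L|-q|D_q|+\rho$. *)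

(* Defs.v *)
From mathcomp Require Import all_boot all_order all_algebra.
Set Implicit Arguments. Unset Strict Implicit. Unset Printing Implicit Defensive.

Fixpoint rep (gens : seq nat) (z : nat) : bool :=
  match gens with
  | [::] => z == 0
  | g :: gs => [exists k : 'I_z.+1, (k * g <= z) && rep gs (z - k * g)]
  end.

(* <a_1,...,a_n>_t = (N a_1 + ... + N a_n) U {z >= t}, as a predicate on nat. *)
Definition gsg (gens : seq nat) (t : nat) : pred nat :=
  fun z => rep gens z || (t <= z).

(* A numerical semigroup S is handled together with a bound T such that every
   z >= T lies in S (for <..>_t take T = t).  Under that hypothesis
   conductor S T = 1 + max (Z \ S)  (max over the finitely many gaps;
   negative integers are never in S, so the value is 0 when S = N). *)
Definition conductor (S : pred nat) (T : nat) : nat :=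
  \max_(z < T | ~~ S z) z.+1.

(* multiplicity = min (S \ {0}); T is in S, so the min is taken over [1, T]. *)
Definition multiplicity (S : pred nat) (T : nat) : nat :=
  \big[minn/T]_(1 <= z < T.+1 | S z) z.

Definition inD (S : pred nat) (z : nat) : bool :=
  [exists x : 'I_z.+1, [&& 0 < x, x < z, S x & S (z - x)]].

Definition inP (S : pred nat) (z : nat) : bool :=
  [&& 0 < z, S z & ~~ inD S z].

Definition q_of (S : pred nat) (T : nat) : nat :=
  let c := conductor S T in let m := multiplicity S T in (c + m - 1) %/ m.

Definition rho_of (S : pred nat) (T : nat) : nat :=
  q_of S T * multiplicity S T - conductor S T.

(* W_0(S) = |P ∩ L| |L| - q |D_q| + rho, with L = S ∩ [0,c-1],
   D_q = D ∩ [c, c+m-1]. *)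
Definition W0 (S : pred nat) (T : nat) : int :=
  let c := conductor S T in
  let m := multiplicity S T in
  let L := count S (iota 0 c) in
  let PL := count (inP S) (iota 0 c) in
  let Dq := count (inD S) (iota c m) in
  (PL * L)%:Z - (q_of S T * Dq)%:Z + (rho_of S T)%:Z.

(* Main.v *)
Require Import Defs.
From mathcomp Require Import all_boot all_order all_algebra.
From mathcomp Require Import zify.
Import GRing.Theory.

Lemma rep_cons g gs z : rep (g :: gs) z <-> exists k, k * g <= z /\ rep gs (z - k * g).
Proof.
split.
- by move=> /= /existsP [k /andP [h1 h2]]; exists k.
- move=> [k [h1 h2]] /=; apply/existsP.
  case: (posnP g) => [g0|gpos].
  + exists (Ordinal (ltn0Sn z)) => /=. rewrite g0 muln0 subn0 in h2.
    by rewrite mul0n subn0 h2.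
  + have hk : k < z.+1 by nia.
    by exists (Ordinal hk) => /=; rewrite h1 h2.
Qed.

Lemma repP3 m a b z : rep [:: m; a; b] z <-> exists i j k, z = i * m + j * a + k * b.
Proof.
split.
- move/rep_cons => [i [h1 /rep_cons [j [h2 /rep_cons [k [h3 /eqP h4]]]]]].
  exists i, j, k; lia.
- move=> [i [j [k ->]]]. apply/rep_cons; exists i; split; first lia.
  apply/rep_cons; exists j; split; first lia.
  apply/rep_cons; exists k; split; first lia.
  apply/eqP; lia.
Qed.

Ltac pick := repeat (apply/orP; first [left; apply/eqP; lia | right]); apply/eqP; lia.

Definition Sset m a b :=
  [:: 0; m; 2 * m; 3 * m; a; a+m; a+2 * m; b; b+m; b+2 * m; 2 * a; a+b; 2 * b].
Definition Dset m a b :=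
  [:: 4 * m; a+3 * m; b+3 * m; 2 * a+m; a+b+m; 2 * b+m; 3 * a; 2 * a+b; a+2 * b; 3 * b].

Lemma memS m a b z : 3 * m + 1 <= 2 * a -> a < b -> 3 * b <= 5 * m - 1 ->
  z < 4 * m -> gsg [:: m; a; b] (4 * m) z = (z \in Sset m a b).
Proof.
move=> H1 H2 H3 hz.
rewrite /gsg (leqNgt (4 * m) z) hz orbF. apply/idP/idP.
- move/repP3 => [i [j [k E]]].
  have hjk : j + k <= 2.
  { case: (leqP (j+k) 2) => // h3.
    have : 3 * a <= (j + k) * a by apply: leq_mul.
    have : (j + k) * a <= j * a + k * b by rewrite mulnDl leq_add2l leq_mul2l ltnW ?orbT.
    lia. }
  have hi : i <= 3.
  { case: (leqP i 3) => // h.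
    have : 4 * m <= i * m by apply: leq_mul.
    lia. }
  move: hi hjk E. rewrite /Sset !inE.
  case: j => [|[|[|j]]]; case: k => [|[|[|k]]]; try (move=> *; exfalso; lia);
  case: i => [|[|[|[|i]]]]; move=> *; subst z; first [exfalso; lia | pick].
- move=> hin; apply/repP3. rewrite /Sset !inE in hin.
  repeat (case/orP: hin => [/eqP ->|hin]); last move/eqP: hin => ->.
  + by exists 0, 0, 0.
  + by exists 1, 0, 0; lia.
  + by exists 2, 0, 0; lia.
  + by exists 3, 0, 0; lia.
  + by exists 0, 1, 0; lia.
  + by exists 1, 1, 0; lia.
  + by exists 2, 1, 0; lia.
  + by exists 0, 0, 1; lia.
  + by exists 1, 0, 1; lia.
  + by exists 2, 0, 1; lia.
  + by exists 0, 2, 0; lia.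
  + by exists 0, 1, 1; lia.
  + by exists 0, 0, 2; lia.
Qed.

Arguments memS {m a b z}.

Lemma Sge m a b z : 3 * m + 1 <= 2 * a -> a < b -> 3 * b <= 5 * m - 1 ->
  z < 4 * m -> gsg [:: m; a; b] (4 * m) z -> 0 < z -> m <= z.
Proof.
move=> H1 H2 H3 hz; rewrite (memS H1 H2 H3 hz) /Sset !inE; lia.
Qed.

Arguments Sge {m a b z}.

Lemma inD_wit (S : pred nat) z x : 0 < x < z -> S x -> S (z - x) -> inD S z.
Proof.
move=> /andP [h1 h2] h3 h4. have h : x < z.+1 by lia.
apply/existsP; exists (Ordinal h) => /=; by rewrite h1 h2 h3 h4.
Qed.

Ltac wit H1 H2 H3 x :=
  apply: (@inD_wit _ _ x); [lia | rewrite (memS H1 H2 H3); [rewrite /Sset !inE; pick | lia]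
                                | rewrite (memS H1 H2 H3); [rewrite /Sset !inE; pick | lia]].

Lemma memD m a b z : 3 * m + 1 <= 2 * a -> a < b -> 3 * b <= 5 * m - 1 ->
  a + 3 * m != 3 * b -> b + 3 * m != 3 * a ->
  4 * m <= z < 5 * m -> inD (gsg [:: m; a; b] (4 * m)) z = (z \in Dset m a b).
Proof.
move=> H1 H2 H3 N1 N2 hz. apply/idP/idP.
- case/existsP => [[x xlt]] /and4P [x0 xz Sx Sy] /=. simpl in *. clear xlt.
  have xl : x < 4 * m.
  { case: (ltnP x (4 * m)) => // h.
    have : m <= z - x by apply: (Sge H1 H2 H3) => //; lia.
    lia. }
  have yl : z - x < 4 * m.
  { case: (ltnP (z - x) (4 * m)) => // h.
    have : m <= x by apply: (Sge H1 H2 H3) => //; lia.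
    lia. }
  rewrite (memS H1 H2 H3 xl) /Sset !inE in Sx.
  rewrite (memS H1 H2 H3 yl) /Sset !inE in Sy.
  rewrite /Dset !inE.
  move: Sy; set y := z - x => Sy. have zxy : z = x + y by rewrite /y; lia.
  clearbody y. subst z.
  repeat (case/orP: Sx => [/eqP E|Sx]); last move/eqP: Sx => E; subst x;
  (repeat (case/orP: Sy => [/eqP E|Sy]); last move/eqP: Sy => E); subst y;
  first [exfalso; lia | pick].
- move=> hin. rewrite /Dset !inE in hin.
  repeat (case/orP: hin => [/eqP ->|hin]); last move/eqP: hin => ->.
  all: first [wit H1 H2 H3 m | wit H1 H2 H3 a | wit H1 H2 H3 b].
Qed.

Lemma memP m a b z : 3 * m + 1 <= 2 * a -> a < b -> 3 * b <= 5 * m - 1 ->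
  z < 4 * m -> inP (gsg [:: m; a; b] (4 * m)) z = (z \in [:: m; a; b]).
Proof.
move=> H1 H2 H3 hz. rewrite /inP. apply/idP/idP.
- case/and3P => z0 Sz nD. move: nD; apply: contraR => hn.
  rewrite (memS H1 H2 H3 hz) /Sset !inE in Sz. rewrite !inE in hn.
  repeat (case/orP: Sz => [/eqP E|Sz]); last move/eqP: Sz => E; subst z.
  all: try (first [exfalso; lia | wit H1 H2 H3 m | wit H1 H2 H3 a | wit H1 H2 H3 b]).
- rewrite !inE => hin. apply/and3P; split.
  + lia.
  + rewrite (memS H1 H2 H3 hz) /Sset !inE.
    repeat (case/orP: hin => [/eqP E|hin]); last move/eqP: hin => E; subst z; pick.
  + apply/negP => /existsP [x /and4P [x0 xz Sx Sy]].
    have : m <= x by apply: (Sge H1 H2 H3) => //; lia.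
    have : m <= z - x by apply: (Sge H1 H2 H3) => //; lia.
    lia.
Qed.

Arguments memD {m a b z}.
Arguments memP {m a b z}.

Lemma count_iota_eq (p : pred nat) lo n s :
  (forall z, lo <= z < lo + n -> p z = (z \in s)) -> uniq s ->
  all (fun z => lo <= z < lo + n) s -> count p (iota lo n) = size s.
Proof.
move=> hp us hs.
rewrite (@eq_in_count _ _ (fun z => z \in s)); last by move=> z; rewrite mem_iota => /hp.
rewrite -size_filter. apply: perm_size. apply: uniq_perm.
- by apply: filter_uniq; apply: iota_uniq.
- exact: us.
- move=> z; rewrite mem_filter mem_iota. case hz: (z \in s) => //=.
  by move/allP: hs => /(_ z hz).
Qed.

Lemma bigmin_le (r : seq nat) (P : pred nat) (F : nat -> nat) T j :
  j \in r -> P j -> \big[minn/T]_(i <- r | P i) F i <= F j.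
Proof.
elim: r => [|x r IH] //. rewrite in_cons big_cons => /orP [/eqP <-|hj] hP.
- by rewrite hP geq_minl.
- case: (P x); last exact: IH.
  by apply: leq_trans (geq_minr _ _) (IH hj hP).
Qed.

Theorem proposition3p1 (m a b : nat) :
  0 < m -> 0 < a -> 0 < b ->
  3 * m + 1 <= 2 * a ->   (* (3m+1)/2 <= a *)
  a < b ->
  3 * b <= 5 * m - 1 ->   (* b <= (5m-1)/3 *)
  uniq [seq x %% m | x <- [:: a; b; 2 * a; a + b; 2 * b; 3 * a;
                             2 * a + b; a + 2 * b; 3 * b]] ->
  conductor (gsg [:: m; a; b] (4 * m)) (4 * m) = 4 * m /\
  W0 (gsg [:: m; a; b] (4 * m)) (4 * m) = (-1)%R.
Proof.
move=> m0 a0 b0 H1 H2 H3 Hu.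
have M1 : (3 * b) %% m != a %% m.
{ apply/negP => /eqP E. move: Hu. by rewrite /= !inE E eqxx ?orbT ?orTb /= ?andbF. }
have M2 : (3 * a) %% m != b %% m.
{ apply/negP => /eqP E. move: Hu. by rewrite /= !inE E eqxx ?orbT ?orTb /= ?andbF. }
have N1 : a + 3 * m != 3 * b.
{ apply/eqP => E. move: M1. by rewrite -E addnC modnMDl eqxx. }
have N2 : b + 3 * m != 3 * a.
{ apply/eqP => E. move: M2. by rewrite -E addnC modnMDl eqxx. }
clear Hu M1 M2.
set S := gsg [:: m; a; b] (4 * m).
have cond : conductor S (4 * m) = 4 * m.
{ rewrite /conductor. apply/eqP; rewrite eqn_leq; apply/andP; split.
  - by apply/bigmax_leqP => i _; exact: ltn_ord.
  - have h : 4 * m - 1 < 4 * m by lia.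
    apply: (@leq_trans (Ordinal h).+1); first by rewrite /=; lia.
    apply: (@leq_bigmax_cond _ (fun i : 'I_(4 * m) => ~~ S i) (fun i => (nat_of_ord i).+1) (Ordinal h)).
    rewrite /= /S (memS H1 H2 H3 h) /Sset !inE; lia. }
have mult : multiplicity S (4 * m) = m.
{ rewrite /multiplicity. apply/eqP; rewrite eqn_leq; apply/andP; split.
  - apply: (@bigmin_le _ _ (fun z => z) _ m).
    + rewrite mem_index_iota; lia.
    + rewrite /S (memS H1 H2 H3); [rewrite /Sset !inE; pick | lia].
  - rewrite big_seq_cond.
    apply: (big_ind (fun x => m <= x)).
    + lia.
    + by move=> x y hx hy; rewrite leq_min hx hy.
    + move=> i /andP [hi Si]. rewrite mem_index_iota in hi.
      case: (ltnP i (4 * m)) => hi4; last lia.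
      by apply: (Sge H1 H2 H3) => //; lia. }
split; first exact: cond.
rewrite /W0 /q_of /rho_of cond mult.
have cL : count S (iota 0 (4 * m)) = 13.
{ rewrite (@count_iota_eq _ _ _ (Sset m a b)) //.
  - move=> z hz; apply: (memS H1 H2 H3); lia.
  - rewrite /Sset /= !inE; repeat (apply/andP; split); lia.
  - rewrite /Sset /=; lia. }
have cP : count (inP S) (iota 0 (4 * m)) = 3.
{ rewrite (@count_iota_eq _ _ _ [:: m; a; b]) //.
  - move=> z hz; apply: (memP H1 H2 H3); lia.
  - rewrite /= !inE; lia.
  - rewrite /=; lia. }
have cD : count (inD S) (iota (4 * m) m) = 10.
{ rewrite (@count_iota_eq _ _ _ (Dset m a b)) //.
  - move=> z hz; apply: (memD H1 H2 H3 N1 N2); lia.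
  - rewrite /Dset /= !inE; repeat (apply/andP; split); lia.
  - rewrite /Dset /=; lia. }
have q4 : (4 * m + m - 1) %/ m = 4.
{ have -> : 4 * m + m - 1 = 4 * m + (m - 1) by lia.
  rewrite divnMDl // divn_small; lia. }
rewrite cL cP cD /q_of cond mult q4 subnn. reflexivity.
Qed.
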